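(* Let $K\in\{1,2,3,4\}$, let $n_0\ge 0$, and let $\alpha_1,\dots,\alpha_K\ge 0$ and $\beta_1,\dots,\beta_K>0$ be real numbers. Consider the linear function $f(x_1,\dots,x_K)=\sum_{k=1}^{K}\alpha_k x_k$ of real variables $x_1,\dots,x_K$, subject to the constraints $$\Big|\sum_{k\in\mathcal{K}}\beta_k x_k\Big|\le n_0\sqrt{\sum_{k\in\mathcal{K}}\beta_k}\quad\text{for every nonempty } \mathcal{K}\subseteq\{1,2,\dots,K\}.$$ Set $\gamma_k=\alpha_k/\beta_k$ and choose a permutation $\sigma$ of $\{1,\dots,K\}$ such that $\gamma_{\sigma(1)}\le\gamma_{\sigma(2)}\le\dots\le\gamma_{\sigma(K)}$; write $\tilde\gamma_k=\gamma_{\sigma(k)}$, $\tilde\alpha_k=\alpha_{\sigma(k)}$, $\tilde\beta_k=\beta_{\sigma(k)}$, $\tilde x_k=x_{\sigma(k)}$, and $\tilde\gamma_0=0$. Then the maximum of $f$ over the feasible set is $$f_{\max}=\mathcal{F}(K,n_0,V_\alpha,V_\beta):=n_0\sum_{n=1}^{K}(\tilde\gamma_n-\tilde\gamma_{n-1})\sqrt{\sum_{k=n}^{K}\tilde\beta_k},$$ where $V_\alpha=[\alpha_1,\dots,\alpha_K]$, $V_\beta=[\beta_1,\dots,\beta_K]$, and it is attained at the feasible point given by $\tilde x_k=\tilde x_k^{*}$, where $$\tilde x_k^{*}=\frac{n_0}{\tilde\beta_k}\left(\sqrt{\sum_{n=k}^{K}\tilde\beta_n}-\sqrt{\sum_{n=k+1}^{K}\tilde\beta_n}\right),\quad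 k=1,\dots,K$$ (an empty sum being $0$). Moreover, the minimum of $f$ over the feasible set is $f_{\min}=-f_{\max}=-\mathcal{F}(K,n_0,V_\alpha,V_\beta)$, attained at $\tilde x_k=-\tilde x_k^{*}$, $k=1,\dots,K$. *)

(* Defs.v *)
From HB Require Import structures.
From mathcomp Require Import all_boot all_order all_algebra all_fingroup.
From mathcomp Require Import reals.
Set Implicit Arguments. Unset Strict Implicit. Unset Printing Implicit Defensive.
Import Order.TTheory GRing.Theory Num.Theory.
Local Open Scope ring_scope.

Definition lin_obj (R : realType) (K : nat) (alpha x : 'I_K -> R) : R :=
  \sum_(k < K) alpha k * x k.

Definition feasible (R : realType) (K : nat) (n0 : R) (beta x : 'I_K -> R) : Prop :=
  forall S : {set 'I_K}, S != set0 ->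
    `| \sum_(k in S) beta k * x k | <= n0 * Num.sqrt (\sum_(k in S) beta k).

(* 1-based "tilde" of a family: tld sigma f n = f (sigma (n-1)) for 1 <= n <= K,
   and 0 otherwise (in particular tld sigma f 0 = 0, giving gamma~_0 = 0). *)
Definition tld (R : realType) (K : nat) (sigma : 'S_K) (f : 'I_K -> R) (n : nat) : R :=
  if n is m.+1 then odflt 0 (omap (fun i : 'I_K => f (sigma i)) (insub m)) else 0.

Definition gammaf (R : realType) (K : nat) (alpha beta : 'I_K -> R) (k : 'I_K) : R :=
  alpha k / beta k.

Definition Fmax (R : realType) (K : nat) (n0 : R) (sigma : 'S_K)
  (alpha beta : 'I_K -> R) : R :=
  n0 * \sum_(1 <= n < K.+1)
        (tld sigma (gammaf alpha beta) n - tld sigma (gammaf alpha beta) n.-1)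
        * Num.sqrt (\sum_(n <= k < K.+1) tld sigma beta k).

Definition xstar_tld (R : realType) (K : nat) (n0 : R) (sigma : 'S_K)
  (beta : 'I_K -> R) (k : nat) : R :=
  n0 / tld sigma beta k *
  (Num.sqrt (\sum_(k <= n < K.+1) tld sigma beta n)
   - Num.sqrt (\sum_(k.+1 <= n < K.+1) tld sigma beta n)).

(* the point x* in original coordinates: x_{sigma(j)} = x~*_{j+1} (0-based j) *)
Definition xstar (R : realType) (K : nat) (n0 : R) (sigma : 'S_K)
  (beta : 'I_K -> R) (i : 'I_K) : R :=
  xstar_tld n0 sigma beta (sigma^-1 i)%g.+1.

(* Main.v *)
Require Import Defs.
From HB Require Import structures.
From mathcomp Require Import all_boot all_order all_algebra all_fingroup.
From mathcomp Require Import reals.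
From mathcomp Require Import ring lra.
Import Order.TTheory GRing.Theory Num.Theory.
Local Open Scope ring_scope.

Set Implicit Arguments.
Section Aux.
Variable R : realType.

Lemma sqrt_conc (T U b : R) : 0 <= U -> U <= T -> 0 <= b ->
  Num.sqrt (T + b) - Num.sqrt T <= Num.sqrt (U + b) - Num.sqrt U.
Proof.
move=> U0 UT b0.
have T0 : 0 <= T by apply: le_trans UT.
have pq : Num.sqrt (T + b) * Num.sqrt U <= Num.sqrt (U + b) * Num.sqrt T.
  rewrite -!sqrtrM ?addr_ge0 //; apply: ler_wsqrtr; nra.
have e1 := sqr_sqrtr (addr_ge0 T0 b0). have e2 := sqr_sqrtr U0.
have e3 := sqr_sqrtr (addr_ge0 U0 b0). have e4 := sqr_sqrtr T0.
have h1 := sqrtr_ge0 (T + b). have h2 := sqrtr_ge0 U.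
have h3 := sqrtr_ge0 (U + b). have h4 := sqrtr_ge0 T.
suff: Num.sqrt (T + b) + Num.sqrt U <= Num.sqrt (U + b) + Num.sqrt T by lra.
rewrite -ler_sqr ?nnegrE ?addr_ge0 // !sqrrD e1 e2 e3 e4 !mulr2n.
clear e1 e2 e3 e4; lra.
Qed.

Lemma abel (g z : nat -> R) : g 0%N = 0 -> forall m,
  \sum_(1 <= j < m.+1) g j * z j =
  \sum_(1 <= n < m.+1) (g n - g n.-1) * \sum_(n <= j < m.+1) z j.
Proof.
move=> g0; elim=> [|m IH]; first by rewrite !big_geq.
have tele : \sum_(1 <= n < m.+1) (g n - g n.-1) = g m.
  elim: m {IH} => [|m IH]; first by rewrite big_geq.
  by rewrite big_nat_recr //= IH; ring.
rewrite big_nat_recr // IH [in RHS]big_nat_recr //=.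
have -> : \sum_(1 <= n < m.+1) (g n - g n.-1) * \sum_(n <= j < m.+2) z j =
  \sum_(1 <= n < m.+1) ((g n - g n.-1) * \sum_(n <= j < m.+1) z j
   + (g n - g n.-1) * z m.+1).
  apply: eq_big_nat => i /andP[_ hi]; by rewrite big_nat_recr ?mulrDr // ltnW.
rewrite big_split /= -big_distrl /= tele big_nat1; ring.
Qed.

Definition tail (b : nat -> R) N k := \sum_(k <= j < N) b j.

Lemma tail_dec (b : nat -> R) N k : 0 <= b k -> tail b N k.+1 <= tail b N k.
Proof.
move=> hb; rewrite /tail; case: (ltnP k N) => hk.
  by rewrite [X in _ <= X]big_ltn // lerDr.
by rewrite !big_geq // leqW.
Qed.

Lemma conc_sum (b : nat -> R) N (P : pred nat) : (forall k, 0 <= b k) ->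
  forall m,
  \sum_(m <= k < N | P k) (Num.sqrt (tail b N k) - Num.sqrt (tail b N k.+1))
  <= Num.sqrt (\sum_(m <= k < N | P k) b k).
Proof.
move=> hb m; move: {2}(N - m)%N (erefl (N - m)%N) => d.
elim: d m => [|d IH] m hd.
  have hN : (N <= m)%N by rewrite -subn_eq0 hd.
  by rewrite big_geq // big_geq // sqrtr0.
have hm : (m < N)%N by rewrite -subn_gt0 hd.
have hd' : (N - m.+1)%N = d by rewrite subnS hd.
rewrite big_ltn_cond // [X in _ <= Num.sqrt X]big_ltn_cond //.
case: (P m); last exact: IH.
set U := \sum_(m.+1 <= i < N | P i) b i.
have U0 : 0 <= U by apply: sumr_ge0.
have UT : U <= tail b N m.+1.
  rewrite /U /tail big_mkcond /=; apply: ler_sum_nat => i _.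
  by case: (P i).
have -> : tail b N m = tail b N m.+1 + b m by rewrite /tail big_ltn // addrC.
have := @sqrt_conc _ _ _ U0 UT (hb m); have := IH _ hd'.
rewrite -/U (addrC (b m)). lra.
Qed.

End Aux.

Section Perm.
Variables (R : realType) (K : nat) (sigma : 'S_K).

Lemma tldE (f : 'I_K -> R) (j : 'I_K) : tld sigma f j.+1 = f (sigma j).
Proof. by rewrite /tld /= valK. Qed.

Lemma tldS (f : 'I_K -> R) j (hj : (j < K)%N) :
  tld sigma f j.+1 = f (sigma (Ordinal hj)).
Proof. exact: (tldE f (Ordinal hj)). Qed.

Lemma tldN (f : 'I_K -> R) j : (K <= j)%N -> tld sigma f j.+1 = 0.
Proof. by move=> h; rewrite /tld /= insubF // ltnNge h. Qed.

Lemma tld0 (f : 'I_K -> R) : tld sigma f 0 = 0.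
Proof. by []. Qed.

Lemma tldM (f h : 'I_K -> R) k :
  tld sigma (fun i => f i * h i) k = tld sigma f k * tld sigma h k.
Proof. by case: k => [|k] /=; rewrite ?mul0r //; case: insub => //=; rewrite mul0r. Qed.

Lemma conv (Q : pred 'I_K) (P : pred nat) (F : nat -> R) :
  P 0%N = false -> (forall j : 'I_K, P j.+1 = Q j) ->
  \sum_(j < K | Q j) F j.+1 = \sum_(k < K.+1 | P k) F k.
Proof.
move=> P0 PQ; rewrite [in RHS]big_mkcond big_ord_recl P0 /=. rewrite add0r big_mkcond.
by apply: eq_bigr => j _; rewrite /bump leq0n add1n PQ.
Qed.

Lemma sumS (h : 'I_K -> R) (Q : pred 'I_K) (P : pred nat) :
  P 0%N = false -> (forall j : 'I_K, P j.+1 = Q j) ->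
  \sum_(i | Q ((sigma^-1)%g i)) h i = \sum_(k < K.+1 | P k) tld sigma h k.
Proof.
move=> P0 PQ; rewrite (reindex_inj (@perm_inj _ sigma)) /=.
rewrite -(conv Q P (tld sigma h) P0 PQ); apply: eq_big => j; first by rewrite permK.
by rewrite tldE.
Qed.

Lemma tailS (h : 'I_K -> R) n : (1 <= n)%N ->
  \sum_(i in [set i | (n <= ((sigma^-1)%g i).+1)%N]) h i
  = \sum_(n <= k < K.+1) tld sigma h k.
Proof.
move=> hn; rewrite big_geq_mkord.
rewrite -(sumS h (fun j : 'I_K => (n <= j.+1)%N) (fun k => true && (n <= k)%N)).
- by apply: eq_bigl => i; rewrite inE.
- by case: n hn.
- by [].
Qed.

End Perm.

Unset Implicit Arguments.

Lemma feasN (R : realType) (K : nat) (n0 : R) (beta x : 'I_K -> R) :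
  feasible n0 beta x -> feasible n0 beta (fun i => - x i).
Proof.
move=> hx S hS; under eq_bigr do rewrite mulrN.
by rewrite sumrN normrN; apply: hx.
Qed.

Lemma linN (R : realType) (K : nat) (alpha x : 'I_K -> R) :
  lin_obj alpha (fun i => - x i) = - lin_obj alpha x.
Proof. by rewrite /lin_obj -sumrN; apply: eq_bigr => i _; rewrite mulrN. Qed.

Theorem theorem1 (R : realType) (K : nat) (hK1 : (1 <= K)%N) (hK4 : (K <= 4)%N)
  (n0 : R) (hn0 : 0 <= n0) (alpha beta : 'I_K -> R)
  (halpha : forall k, 0 <= alpha k) (hbeta : forall k, 0 < beta k)
  (sigma : 'S_K)
  (hsorted : forall i j : 'I_K, (i <= j)%N ->
      gammaf alpha beta (sigma i) <= gammaf alpha beta (sigma j)) :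
  (* maximum *)
  feasible n0 beta (xstar n0 sigma beta) /\
  lin_obj alpha (xstar n0 sigma beta) = Fmax n0 sigma alpha beta /\
  (forall x : 'I_K -> R, feasible n0 beta x ->
      lin_obj alpha x <= Fmax n0 sigma alpha beta) /\
  (* minimum *)
  feasible n0 beta (fun i => - xstar n0 sigma beta i) /\
  lin_obj alpha (fun i => - xstar n0 sigma beta i) = - Fmax n0 sigma alpha beta /\
  (forall x : 'I_K -> R, feasible n0 beta x ->
      - Fmax n0 sigma alpha beta <= lin_obj alpha x).
Proof.
set g := tld sigma (gammaf alpha beta).
set b := tld sigma beta.
set T := tail R b K.+1.
have hb : forall k, 0 <= b k.
  case=> [|k]; first by rewrite /b tld0.
  case: (ltnP k K) => hk; last by rewrite /b (@tldN R K sigma _ _ hk).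
  rewrite /b (@tldS R K sigma _ _ hk); exact: ltW.
have bne : forall i, beta i != 0 by move=> i; rewrite gt_eqF.
have hc : forall n, (1 <= n < K.+1)%N -> 0 <= g n - g n.-1.
  case=> [//|[|n]] /andP[_ hn].
    have h0 : (0 < K)%N by [].
    change (0 <= g 1%N - g 0%N); rewrite /g tld0 subr0 (@tldS R K sigma _ _ h0).
    by rewrite /gammaf divr_ge0 // ltW.
  have h1 : (n.+1 < K)%N by [].
  have h2 : (n < K)%N by apply: ltnW.
  change (0 <= g n.+2 - g n.+1).
  rewrite subr_ge0 /g (@tldS R K sigma _ _ h1) (@tldS R K sigma _ _ h2).
  by apply: hsorted => /=.
have g0 : g 0%N = 0 by [].
have obj : forall x, lin_obj alpha x = \sum_(1 <= n < K.+1) (g n - g n.-1) *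
     \sum_(n <= j < K.+1) tld sigma (fun i => beta i * x i) j.
  move=> x; rewrite -abel //.
  have -> : lin_obj alpha x = \sum_(i in [set i | (1 <= ((sigma^-1)%g i).+1)%N])
      alpha i * x i.
    by apply: eq_bigl => i; rewrite inE.
  rewrite tailS //; apply: eq_bigr => k _; rewrite !tldM.
  case: k => [|k]; first by rewrite /g !tld0 !mul0r.
  case: (ltnP k K) => hk; last by rewrite /g !(@tldN R K sigma _ _ hk) !mul0r.
  rewrite /g !(@tldS R K sigma _ _ hk) /gammaf; field; exact: bne.
have FmaxE : Fmax n0 sigma alpha beta = \sum_(1 <= n < K.+1) (g n - g n.-1) *
     (n0 * Num.sqrt (T n)).
  by rewrite /Fmax mulr_sumr; apply: eq_bigr => n _; rewrite mulrCA.
have upper : forall x : 'I_K -> R, feasible n0 beta x ->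
      lin_obj alpha x <= Fmax n0 sigma alpha beta.
  move=> x hx; rewrite obj FmaxE; apply: ler_sum_nat => n hn.
  apply: ler_wpM2l; first exact: hc.
  case/andP: hn => h1 h2.
  rewrite /T /tail -tailS // -[\sum_(n <= j < K.+1) b j]tailS //.
  apply: le_trans (ler_norm _) (hx _ _).
  have h3 : (n.-1 < K)%N by rewrite prednK.
  apply/set0Pn; exists (sigma (Ordinal h3)); by rewrite inE permK /= prednK.
have xs : forall k, (k < K.+1)%N ->
    tld sigma (fun i => beta i * xstar n0 sigma beta i) k
    = n0 * (Num.sqrt (T k) - Num.sqrt (T k.+1)).
  case=> [_|j hj].
    by rewrite /T /tail [in RHS]big_ltn //= add0r subrr mulr0.
  rewrite ltnS in hj.
  rewrite (@tldS R K sigma _ _ hj) /xstar permK /xstar_tld tldE.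
  rewrite /T /tail /b /=; field; exact: bne.
have Zs : forall n, (n <= K.+1)%N ->
    \sum_(n <= j < K.+1) tld sigma (fun i => beta i * xstar n0 sigma beta i) j
    = n0 * Num.sqrt (T n).
  move=> n hn; rewrite (eq_big_nat _ _ (F2 := fun k =>
     n0 * ((- Num.sqrt (T k.+1)) - (- Num.sqrt (T k))))); last first.
    by move=> k /andP[_ hk]; rewrite xs // opprK addrC.
  rewrite -mulr_sumr (telescope_sumr (fun k => - Num.sqrt (T k)) hn).
  by rewrite /T /tail big_geq // sqrtr0 oppr0 add0r opprK.
have valx : lin_obj alpha (xstar n0 sigma beta) = Fmax n0 sigma alpha beta.
  rewrite obj FmaxE; apply: eq_big_nat => n /andP[_ hn].
  by rewrite Zs // ltnW.
have feasx : feasible n0 beta (xstar n0 sigma beta).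
  move=> S _.
  set P := fun k : nat => [exists j : 'I_K, (k == j.+1) && (sigma j \in S)].
  have P0 : P 0%N = false by apply/negbTE/existsP => -[].
  have PQ : forall j : 'I_K, P j.+1 = (sigma j \in S).
    move=> j; apply/existsP/idP => [[j' /andP[/eqP e h]]|h].
      by have -> : j = j' by apply: val_inj; case: e.
    by exists j; rewrite eqxx.
  have cv : forall h : 'I_K -> R,
      \sum_(i in S) h i = \sum_(k < K.+1 | P k) tld sigma h k.
    move=> h; rewrite -(@sumS R K sigma h _ _ P0 PQ); apply: eq_bigl => i.
    by rewrite permKV.
  rewrite !cv (eq_bigr (fun k : 'I_K.+1 => n0 * (Num.sqrt (T k) - Num.sqrt (T k.+1))));
    last by move=> k _; exact: xs.
  rewrite -mulr_sumr.
  have D0 : 0 <= \sum_(k < K.+1 | P k) (Num.sqrt (T k) - Num.sqrt (T k.+1)).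
    apply: sumr_ge0 => k _; rewrite subr_ge0; apply: ler_wsqrtr.
    exact: tail_dec.
  rewrite ger0_norm ?mulr_ge0 //; apply: ler_wpM2l => //.
  have := @conc_sum R b K.+1 P hb 0; rewrite !big_mkord; exact.
split; first exact: feasx.
split; first exact: valx.
split; first exact: upper.
split; first exact: feasN.
split; first by rewrite linN valx.
move=> x hx; have := upper _ (feasN _ _ _ _ _ hx); rewrite linN; lra.
Qed.
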